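(* Let $T$ be a tree with positive edge weights rooted at the homebase $r$, let $q\ge 0$, and let $v$ be an internal vertex of $T$, i.e., a vertex different from $r$ with exactly one child. In a cost-optimal strategy exploring $T$, an agent occupying $v$ never returns, in its next move, to the vertex it occupied just before $v$.
   Context: Exploration model: given a connected graph with positive edge weights, a homebase vertex, and invoking cost $q\ge 0$, a strategy is a sequence of moves, each either invoking a new agent (appearing at the homebase) or an agent traversing an edge incident to its current vertex. A vertex is explored when first visited; the strategy explores the graph when every vertex has been visited by some agent (agents need not return). With $k$ agents, agent $i$ traversing total distance $d_i$ (weights counted with multiplicity), the cost is $kq+\sum_i d_i$; a strategy is cost-optimal if it explores the graph with minimum cost (off-line setting). *)

(* Defs.v *)
From HB Require Import structures.
From mathcomp Require Import all_boot all_order all_algebra.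
Set Implicit Arguments. Unset Strict Implicit. Unset Printing Implicit Defensive.
Import Order.TTheory GRing.Theory Num.Theory.
Local Open Scope ring_scope.

Definition simple_graph (T : finType) (e : rel T) : Prop :=
  symmetric e /\ irreflexive e.

(* A tree: a connected simple graph with no cycle (a cycle being a closed walk
   through at least 3 pairwise distinct vertices). *)
Definition is_tree (T : finType) (e : rel T) : Prop :=
  [/\ simple_graph e,
      (forall x y : T, connect e x y) &
      (forall c : seq T, ucycle e c -> (size c < 3)%N)].

(* c is a child of v in the tree e rooted at r: c is adjacent to v and every
   path from r to c passes through v. *)
Definition is_child (T : finType) (e : rel T) (r v c : T) : bool :=
  e v c && ~~ connect [rel x y | [&& e x y, x != v & y != v]] r c.

(* A move: invoke a new agent (it appears at the homebase), or agent number i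
   (agents are numbered 0,1,... in order of invocation) traverses the edge
   from its current vertex to y. *)
Inductive move (T : Type) : Type :=
  | Invoke : move T
  | Step : nat -> T -> move T.
Arguments Invoke {T}.

Section Strategy.
Variables (T : finType) (e : rel T) (r : T).

(* positions of the invoked agents, agent i at index i *)
Definition stepf (pos : seq T) (m : move T) : seq T :=
  match m with
  | Invoke => rcons pos r
  | Step i y => set_nth r pos i y
  end.

Definition okmove (pos : seq T) (m : move T) : bool :=
  match m with
  | Invoke => true
  | Step i y => (i < size pos)%N && e (nth r pos i) y
  end.

Definition state (s : seq (move T)) (n : nat) : seq T :=
  foldl stepf [::] (take n s).

Definition valid (s : seq (move T)) : Prop :=
  forall n, (n < size s)%N -> okmove (state s n) (nth Invoke s n).

Definition explores (s : seq (move T)) : Prop :=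
  valid s /\ forall x : T, exists n, (n <= size s)%N /\ x \in state s n.

Definition agent_of (m : move T) : option nat :=
  match m with Invoke => None | Step i _ => Some i end.

Variables (R : realFieldType) (w : T -> T -> R) (q : R).

Definition move_cost (pos : seq T) (m : move T) : R :=
  match m with
  | Invoke => q
  | Step i y => w (nth r pos i) y
  end.

Definition cost (s : seq (move T)) : R :=
  \sum_(0 <= n < size s) move_cost (state s n) (nth Invoke s n).

Definition cost_optimal (s : seq (move T)) : Prop :=
  explores s /\ forall s', explores s' -> cost s <= cost s'.

End Strategy.

(* Main.v *)
Require Import Defs.
From mathcomp Require Import all_boot all_order all_algebra.
Import Order.TTheory GRing.Theory Num.Theory.
Local Open Scope ring_scope.
Set Implicit Arguments. Unset Strict Implicit.
From mathcomp Require Import lra.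

Section Aux.
Variables (T : finType) (e : rel T) (r : T).
Variables (R : realFieldType) (w : T -> T -> R) (q : R).

Fixpoint vfrom (pos : seq T) (s : seq (move T)) : bool :=
  if s is m :: s' then okmove e r pos m && vfrom (stepf r pos m) s' else true.
Fixpoint cfrom (pos : seq T) (s : seq (move T)) : R :=
  if s is m :: s' then move_cost r w q pos m + cfrom (stepf r pos m) s' else 0.
Fixpoint seen (pos : seq T) (s : seq (move T)) (x : T) : bool :=
  (x \in pos) || (if s is m :: s' then seen (stepf r pos m) s' x else false).

Lemma vfromP s pos : (forall n, (n < size s)%N ->
   okmove e r (foldl (stepf r) pos (take n s)) (nth Invoke s n)) <-> vfrom pos s.
Proof.
elim: s pos => [|m s IH] pos /=; first by split.
split.
- move=> H; apply/andP; split; first by have := H 0%N isT; rewrite ?take0.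
  by apply/IH => n Hn; exact: (H n.+1).
- case/andP=> H1 /IH H2 [|n] /=; first by rewrite ?take0.
  exact: H2.
Qed.

Lemma cfromE s pos : \sum_(0 <= n < size s)
  move_cost r w q (foldl (stepf r) pos (take n s)) (nth Invoke s n) = cfrom pos s.
Proof.
elim: s pos => [|m s IH] pos /=; first by rewrite big_geq.
by rewrite big_nat_recl // take0 /= -IH.
Qed.

Lemma seenP s pos x : (exists n, (n <= size s)%N /\ x \in foldl (stepf r) pos (take n s))
  <-> seen pos s x.
Proof.
elim: s pos => [|m s IH] pos /=.
  split; first by case=> -[|n] [] //= _ ->.
  by rewrite orbF => H; exists 0%N; rewrite ?take0.
split.
- case=> -[|n] [] /=; first by rewrite ?take0 => _ ->.
  by move=> Hn Hx; apply/orP; right; apply/IH; exists n.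
- case/orP => [H|/IH [n [Hn Hx]]]; first by exists 0%N; rewrite ?take0.
  by exists n.+1.
Qed.

Lemma vfrom_cat pos a b : vfrom pos (a ++ b) = vfrom pos a && vfrom (foldl (stepf r) pos a) b.
Proof. by elim: a pos => [|m a IH] pos //=; rewrite IH andbA. Qed.

Lemma cfrom_cat pos a b : cfrom pos (a ++ b) = cfrom pos a + cfrom (foldl (stepf r) pos a) b.
Proof. by elim: a pos => [|m a IH] pos /=; rewrite ?add0r // IH addrA. Qed.

Lemma seen_head pos s x : x \in pos -> seen pos s x.
Proof. by case: s => [|m s] /= ->. Qed.

Lemma seen_cat pos a b x : seen pos (a ++ b) x = seen pos a x || seen (foldl (stepf r) pos a) b x.
Proof.
elim: a pos => [|m a IH] pos /=; last by rewrite IH orbA.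
rewrite orbF; case: (boolP (x \in pos)) => H /=; last by [].
by rewrite (@seen_head pos b x H).
Qed.

Lemma mem_set_nth pos i x z : (i < size pos)%N -> z \in set_nth r pos i x -> z = x \/ z \in pos.
Proof.
move=> Hi /(nthP r) [k]; rewrite size_set_nth (maxn_idPr Hi) nth_set_nth /=.
case: eqP => [_ _ <-|_ Hk <-]; [by left | by right; apply: mem_nth].
Qed.

Lemma size_stepf pos m : (size pos <= size (stepf r pos m))%N.
Proof. by case: m => [|j y] /=; rewrite ?size_rcons ?size_set_nth ?leq_maxr. Qed.

Lemma size_foldl pos b : (size pos <= size (foldl (stepf r) pos b))%N.
Proof.
elim: b pos => [|m b IH] pos //=; exact: leq_trans (size_stepf pos m) (IH _).
Qed.

Lemma stepf_set pos i x m : (i < size pos)%N -> agent_of m != Some i ->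
  stepf r (set_nth r pos i x) m = set_nth r (stepf r pos m) i x.
Proof.
case: m => [|j y] /= Hi Hj.
  apply: (@eq_from_nth _ r) => [|k _].
    rewrite size_rcons !size_set_nth size_rcons (maxn_idPr Hi) (maxn_idPr (leq_trans Hi (leqnSn _))) //.
  rewrite nth_rcons !nth_set_nth /= nth_rcons size_set_nth (maxn_idPr Hi).
  case: eqP => // ->; by rewrite Hi.
rewrite set_set_nth; case: eqP => [Eij|_] //.
by move: Hj; rewrite Eij eqxx.
Qed.

Lemma okmove_set pos i x m : (i < size pos)%N -> agent_of m != Some i ->
  okmove e r (set_nth r pos i x) m = okmove e r pos m.
Proof.
case: m => [|j y] //= Hi Hj.
rewrite size_set_nth (maxn_idPr Hi) nth_set_nth /=.
case: eqP => // Eji; by move: Hj; rewrite Eji eqxx.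
Qed.

Lemma cost_set pos i x m : (i < size pos)%N -> agent_of m != Some i ->
  move_cost r w q (set_nth r pos i x) m = move_cost r w q pos m.
Proof.
case: m => [|j y] //= Hi Hj.
rewrite nth_set_nth /=.
case: eqP => // Eji; by move: Hj; rewrite Eji eqxx.
Qed.

Definition noi i (b : seq (move T)) := all (fun m => agent_of m != Some i) b.

Lemma foldl_set pos i x b : (i < size pos)%N -> noi i b ->
  foldl (stepf r) (set_nth r pos i x) b = set_nth r (foldl (stepf r) pos b) i x.
Proof.
elim: b pos => [|m b IH] pos //= Hi /andP[Hm Hb].
rewrite stepf_set // IH //; exact: leq_trans Hi (size_stepf _ _).
Qed.

Lemma vfrom_set pos i x b : (i < size pos)%N -> noi i b ->
  vfrom (set_nth r pos i x) b = vfrom pos b.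
Proof.
elim: b pos => [|m b IH] pos //= Hi /andP[Hm Hb].
rewrite okmove_set // stepf_set // IH //; exact: leq_trans Hi (size_stepf _ _).
Qed.

Lemma cfrom_set pos i x b : (i < size pos)%N -> noi i b ->
  cfrom (set_nth r pos i x) b = cfrom pos b.
Proof.
elim: b pos => [|m b IH] pos //= Hi /andP[Hm Hb].
rewrite cost_set // stepf_set // IH //; exact: leq_trans Hi (size_stepf _ _).
Qed.

Lemma seen_set pos i x b z : (i < size pos)%N -> noi i b ->
  seen (set_nth r pos i x) b z -> z = x \/ seen pos b z.
Proof.
elim: b pos => [|m b IH] pos /= Hi.
  by rewrite orbF => _ /(mem_set_nth Hi) [->|H]; [left|right; rewrite H].
case/andP=> Hm Hb /orP[/(mem_set_nth Hi) [->|H]|]; first by left.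
  by right; rewrite H.
rewrite stepf_set // => /IH [] //; first exact: leq_trans Hi (size_stepf _ _).
  by left.
by move=> H; right; rewrite H orbT.
Qed.

Lemma nth_foldl pos i b : (i < size pos)%N -> noi i b ->
  nth r (foldl (stepf r) pos b) i = nth r pos i.
Proof.
move=> Hi Hb.
have := foldl_set (nth r pos i) Hi Hb.
rewrite (_ : set_nth r pos i (nth r pos i) = pos); last first.
  apply: (@eq_from_nth _ r) => [|k _]; first by rewrite size_set_nth (maxn_idPr Hi).
  by rewrite nth_set_nth /=; case: eqP => // ->.
move=> ->; rewrite nth_set_nth /= eqxx //.
Qed.

Lemma reach v pos s : vfrom pos s ->
  {in pos, forall x, connect [rel x y | [&& e x y, x != v & y != v]] r x} ->
  ~~ seen pos s v -> forall z, seen pos s z ->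
  connect [rel x y | [&& e x y, x != v & y != v]] r z.
Proof.
elim: s pos => [|m s IH] pos /=.
  by move=> _ Hc _ z; rewrite orbF; apply: Hc.
case/andP=> Hok Hv Hc; rewrite negb_or => /andP[Hvp Hs] z.
case/orP => [/Hc //|]; apply: IH => // x.
clear Hv; case: m Hok Hs => [|j y] /= Hok Hs.
  by rewrite mem_rcons in_cons => /orP[/eqP ->|/Hc].
case/andP: Hok => Hj Hey.
have Hyin : y \in set_nth r pos j y.
  apply/(nthP r); exists j; last by rewrite nth_set_nth /= eqxx.
  by rewrite size_set_nth leq_maxl.
have Hyv : y != v.
  by apply: contraNneq Hs => <-; apply: seen_head.
move/(mem_set_nth Hj) => [->|/Hc //].
apply: connect_trans (Hc _ (mem_nth r Hj)) (connect1 _).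
rewrite /= Hey Hyv andbT.
by apply: contraNneq Hvp => <-; apply: mem_nth.
Qed.

End Aux.
Unset Implicit Arguments.
Theorem mainTheorem6 (R : realFieldType) (T : finType) (e : rel T)
  (w : T -> T -> R) (r : T) (q : R) (v : T) (s : seq (move T)) :
  is_tree e ->
  (forall x y, e x y -> 0 < w x y) ->
  (forall x y, w x y = w y x) ->
  0 <= q ->
  v != r ->
  #|[set c | is_child e r v c]| = 1%N ->
  cost_optimal e r w q s ->
  forall (t1 t2 i : nat) (y : T),
    (t1 < t2 < size s)%N ->
    nth Invoke s t1 = Step i v ->
    nth Invoke s t2 = Step i y ->
    (forall t, (t1 < t < t2)%N -> agent_of (nth Invoke s t) != Some i) ->
    y != nth r (state r s t1) i.
Proof.
move=> Htree Hw Hsym Hq Hvr Hcard [[Hval Hexp] Hopt] t1 t2 i y /andP[H12 H2s] Ht1 Ht2 Hnoi.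
set a := take t1 s; set b := drop t1.+1 (take t2 s); set c := drop t2.+1 s.
have H1s : (t1 < size s)%N by apply: ltn_trans H2s.
have Es : s = a ++ Step i v :: b ++ Step i y :: c.
  rewrite -{1}(cat_take_drop t2 s) (drop_nth Invoke H2s) Ht2.
  rewrite -{1}(cat_take_drop t1 (take t2 s)) (drop_nth Invoke); last first.
    by rewrite size_take H2s.
  by rewrite nth_take // Ht1 take_takel ?(ltnW H12) // -catA.
have Hb : noi i b.
  apply/(all_nthP Invoke) => k; rewrite size_drop size_take H2s => Hk.
  rewrite nth_drop nth_take; last by rewrite -ltn_subRL.
  by apply: Hnoi; rewrite ltnS leq_addr /= -ltn_subRL.
set p0 := foldl (stepf r) [::] a.
change (state r s t1) with p0.
set u := nth r p0 i.
have Vs : vfrom e r [::] s by apply/vfromP; exact: Hval.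
rewrite Es vfrom_cat /= vfrom_cat /= -/p0 in Vs.
case/and4P: Vs => Va /andP[Hi Huv] Vb /andP[/andP[_ Hvy] Vc].
rewrite -/u in Huv.
have Hp2 : foldl (stepf r) (set_nth r p0 i v) b = set_nth r (foldl (stepf r) p0 b) i v.
  exact: foldl_set.
rewrite Hp2 nth_set_nth /= eqxx in Hvy.
apply/negP => /eqP Hyu.
have Hi3 : (i < size (foldl (stepf r) p0 b))%N by apply: leq_trans Hi (size_foldl _ _ _).
have E3 : set_nth r (set_nth r (foldl (stepf r) p0 b) i v) i y = foldl (stepf r) p0 b.
  rewrite set_set_nth eqxx Hyu /u -(nth_foldl r Hi Hb).
  apply: (@eq_from_nth _ r) => [|k _]; first by rewrite size_set_nth (maxn_idPr Hi3).
  by rewrite nth_set_nth /=; case: eqP => // ->.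
rewrite Hp2 E3 in Vc.
set s' := a ++ b ++ c.
have Vs' : vfrom e r [::] s'.
  by rewrite /s' vfrom_cat vfrom_cat -/p0 Va Vc andbT -(vfrom_set e r v Hi Hb).
have Hseen : forall x, x != v -> seen r [::] s' x.
  move=> x Hxv; have [n [Hn Hx]] := Hexp x.
  have : seen r [::] s x by apply/seenP; exists n.
  rewrite Es seen_cat /= seen_cat /= -/p0 Hp2 E3 /s' seen_cat seen_cat -/p0.
  case/orP => [->//|]; case/orP => [H|]; first by rewrite (seen_head _ _ H) orbT.
  case/orP => [/(seen_set Hi Hb) [Hxv'|->]|]; [by rewrite Hxv' eqxx in Hxv | by rewrite orbT |].
  case/orP => [/(mem_set_nth Hi3) [Hxv'|H]|->]; last by rewrite !orbT.
    by rewrite Hxv' eqxx in Hxv.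
  by rewrite (seen_head _ _ H) !orbT.
have Hex' : explores e r s'.
  split; first by apply/vfromP.
  move=> x; apply/seenP; case: (eqVneq x v) => [->|/Hseen //].
  have /card_gt0P [c0] : (0 < #|[set c | is_child e r v c]|)%N by rewrite Hcard.
  rewrite inE => /andP [Hvc0 Hnc].
  apply/negPn/negP => Hnv.
  have Hc0v : c0 != v by apply: contraTneq Hvc0 => ->; case: Htree => -[_ ->].
  by rewrite (reach Vs' _ Hnv (Hseen _ Hc0v)) in Hnc.
have := Hopt _ Hex'.
rewrite /cost (cfromE r w q s [::]) (cfromE r w q s' [::]).
rewrite Es /s' !cfrom_cat /= cfrom_cat /= -/p0 Hp2 E3 cfrom_set // nth_set_nth /= eqxx -/u.
have := Hw _ _ Huv; have := Hw _ _ Hvy.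
move: (cfrom _ _ _ _ a) (cfrom _ _ _ p0 b) (cfrom _ _ _ _ c) => A B C h1 h2 h3.
lra.
Qed.
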